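(* Let $k\ge2$ be an integer. For each $t>0$, $\frac1n a_n(\delta_nt)-\mu_n(\delta_nt)\to0$ in $L^1$ as $n\to\infty$.
   Context: $\xi$ is an offspring law on $\{0,1,\dots\}$ with mean 1 and $0<\sigma^2:=\sum_{p\ge2}p(p-1)\xi(p)<\infty$; $T_n$ is a Galton--Watson tree with law $\xi$ conditioned to have $n$ vertices. Each vertex $v$ carries an independent rate-1 Poisson process $N_v$ and is removed at time $\eta_v=\inf\{t:N_v(t)=k\}$. $T_n(t)$ is the set of vertices $v$ such that neither $v$ nor any ancestor of $v$ has been removed by time $t$; $\mu_n(t)=\#T_n(t)/n$; $a_n(t)=\#\{v\in T_n(t):N_v(t)=0\}$; $\delta_n=\sigma^{1/k}n^{-1/(2k)}$. *)

(* Defs.v *)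
From HB Require Import structures.
From mathcomp Require Import all_boot all_order all_algebra.
From mathcomp Require Import all_classical all_reals.
From mathcomp Require Import topology normedtype sequences exp.
Set Implicit Arguments. Unset Strict Implicit. Unset Printing Implicit Defensive.
Import Order.TTheory GRing.Theory Num.Theory.
Local Open Scope ring_scope.

(* ---------- Plane trees with n vertices ----------
   A plane (ordered rooted) tree with n >= 1 vertices is encoded by labelling
   its vertices 0,...,n-1 in depth-first (pre-)order and recording the parent
   function par : 'I_n -> 'I_n (the root 0 is its own "parent").
   Children of a vertex are ordered by their labels. *)

Definition anc (n : nat) (par : {ffun 'I_n -> 'I_n}) (u v : 'I_n) : bool :=
  [exists j : 'I_n.+1, iter j (fun x => par x) v == u].

(* par is the parent function of a plane tree labelled in depth-first order:
   the root is 0, and for v >= 1 the parent of v is < v and is an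
   ancestor-or-self of v-1 (this is exactly the preorder condition). *)
Definition ptree (n : nat) (par : {ffun 'I_n -> 'I_n}) : bool :=
  (0 < n)%N &&
  [forall v : 'I_n,
     if val v == 0%N then par v == v
     else (val (par v) < val v)%N &&
          [exists w : 'I_n, (val w == (val v).-1) && anc par (par v) w]].

Definition outdeg (n : nat) (par : {ffun 'I_n -> 'I_n}) (v : 'I_n) : nat :=
  #|[set w : 'I_n | (par w == v) && (w != v)]|.

Definition gw_weight (R : realType) (xi : nat -> R) (n : nat)
  (par : {ffun 'I_n -> 'I_n}) : R :=
  \prod_(v : 'I_n) xi (outdeg par v).

Definition gw_Z (R : realType) (xi : nat -> R) (n : nat) : R :=
  \sum_(par : {ffun 'I_n -> 'I_n} | ptree par) gw_weight xi par.

(* ---------- Poisson clocks at a fixed time s ----------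
   At time s the process N_v only matters through min(N_v(s), k): vertex v
   has been removed by time s iff eta_v <= s iff N_v(s) >= k.  The law of
   min(N_v(s), k), with N_v(s) ~ Poisson(s), is: *)
Definition poisson_pmf (R : realType) (s : R) (j : nat) : R :=
  expR (- s) * s ^+ j / (j`!)%:R.

Definition capped_law {R : realType} (k : nat) (s : R) (j : 'I_k.+1) : R :=
  if (val j < k)%N then poisson_pmf s j
  else 1 - \sum_(i < k) poisson_pmf s i.

(* m v = min(N_v(s), k).  v is in T_n(s) iff neither v nor an ancestor of v
   has been removed, i.e. N_u(s) < k for all ancestors-or-self u. *)
Definition alive (n k : nat) (par : {ffun 'I_n -> 'I_n})
  (m : {ffun 'I_n -> 'I_k.+1}) (v : 'I_n) : bool :=
  [forall u : 'I_n, anc par u v ==> (val (m u) < k)%N].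

Definition card_alive (n k : nat) (par : {ffun 'I_n -> 'I_n})
  (m : {ffun 'I_n -> 'I_k.+1}) : nat :=
  #|[set v : 'I_n | alive par m v]|.

Definition card_zero (n k : nat) (par : {ffun 'I_n -> 'I_n})
  (m : {ffun 'I_n -> 'I_k.+1}) : nat :=
  #|[set v : 'I_n | alive par m v && (val (m v) == 0%N)]|.

(* E | a_n(s)/n - mu_n(s) |, where the tree is T_n (GW(xi) conditioned on n
   vertices) and the clocks are independent of each other and of the tree. *)
Definition L1_gap (R : realType) (xi : nat -> R) (k n : nat) (s : R) : R :=
  (\sum_(par : {ffun 'I_n -> 'I_n} | ptree par)
     gw_weight xi par *
     \sum_(m : {ffun 'I_n -> 'I_k.+1})
        (\prod_(v : 'I_n) @capped_law R k s (m v)) *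
        `| (card_zero par m)%:R / n%:R - (card_alive par m)%:R / n%:R |)
  / gw_Z xi n.

Definition delta_n (R : realType) (sigma2 : R) (k n : nat) : R :=
  powR (Num.sqrt sigma2) (k%:R^-1) * powR n%:R (- ((2 * k)%:R^-1)).

(* Main.v *)
Require Import Defs.
From mathcomp Require Import all_boot all_order all_algebra.
From mathcomp Require Import all_classical all_reals.
From mathcomp Require Import topology normedtype sequences exp.
Import Order.TTheory GRing.Theory Num.Theory numFieldNormedType.Exports.

Local Open Scope ring_scope.

Lemma partial_exp_le (R : realType) (s : R) (k : nat) : 0 <= s ->
  \sum_(i < k) s ^+ i / (i`!)%:R <= expR s.
Proof.
move=> s0.
have -> : \sum_(i < k) s ^+ i / (i`!)%:R = series (exp_coeff s) k.
  by rewrite /series /= big_mkord.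
rewrite /expR; apply: nondecreasing_cvgn_le; last exact: is_cvg_series_exp_coeff.
apply: nondecreasing_series => i _.
by rewrite /exp_coeff /= divr_ge0 // exprn_ge0.
Qed.

Lemma capped_ge0 (R : realType) (k : nat) (s : R) (j : 'I_k.+1) : 0 <= s ->
  0 <= capped_law s j.
Proof.
move=> s0; rewrite /capped_law; case: ifP => _.
  by rewrite /poisson_pmf mulr_ge0 ?invr_ge0 // mulr_ge0 ?expR_ge0 ?exprn_ge0.
rewrite subr_ge0 /poisson_pmf.
under eq_bigr do rewrite -mulrA.
rewrite -mulr_sumr.
rewrite [leRHS](_ : _ = expR (- s) * expR s); last by rewrite -expRD addNr expR0.
by rewrite ler_wpM2l ?expR_ge0 // partial_exp_le.
Qed.

Lemma capped_sum (R : realType) (k : nat) (s : R) :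
  \sum_(j < k.+1) capped_law s j = 1.
Proof.
rewrite big_ord_recr /= /capped_law /= ltnn.
rewrite (eq_bigr (fun i : 'I_k => poisson_pmf s i)); first by rewrite addrC subrK.
by move=> i _; rewrite /= ltn_ord.
Qed.

Lemma capped0 (R : realType) (k : nat) (s : R) : (0 < k)%N ->
  @capped_law R k s ord0 = expR (- s).
Proof.
by move=> k0; rewrite /capped_law /= k0 /poisson_pmf expr0 mulr1 fact0 divr1.
Qed.

Lemma marg (R : realType) (n k : nat) (p : 'I_k.+1 -> R) (v : 'I_n) :
  \sum_j p j = 1 ->
  \sum_(m : {ffun 'I_n -> 'I_k.+1}) (\prod_u p (m u)) * (m v != ord0)%:R
  = 1 - p ord0.
Proof.
move=> hp.
pose F (u : 'I_n) (j : 'I_k.+1) := if u == v then p j * (j != ord0)%:R else p j.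
have E : \prod_u \sum_j F u j =
   \sum_(m : {ffun 'I_n -> 'I_k.+1}) \prod_u F u (m u) := bigA_distr_bigA F.
have L : \prod_u \sum_j F u j = 1 - p ord0.
  rewrite (bigD1 v) //= [X in _ * X]big1 ?mulr1; last first.
    by move=> u /negbTE uv; rewrite /F uv.
  have hp' : 1 - p ord0 = \sum_(j | j != ord0) p j.
    by rewrite -hp (bigD1 ord0) //= addrC addrK.
  rewrite /F ?eqxx hp' (bigD1 ord0) //= mulr0 add0r.
  by apply: eq_bigr => j ->; rewrite mulr1.
rewrite -L E; apply: eq_bigr => m _.
rewrite (bigD1 v) //= (bigD1 v (P := predT)) //= /F eqxx.
rewrite [X in _ = _ * X](eq_bigr (fun u => p (m u))); last first.
  by move=> u /negbTE ->.
by rewrite mulrAC.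
Qed.

Lemma card_nz (n k : nat) (m : {ffun 'I_n -> 'I_k.+1}) (R : realType) :
  (#|[set v | m v != ord0]|%:R : R) = \sum_v (m v != ord0)%:R.
Proof.
rewrite -sum1_card big_mkcond natr_sum; apply: eq_bigr => v _.
by rewrite inE; case: (m v != ord0).
Qed.

Lemma pt_bound (R : realType) (n k : nat) (par : {ffun 'I_n -> 'I_n})
  (m : {ffun 'I_n -> 'I_k.+1}) :
  `| (card_zero par m)%:R / n%:R - (card_alive par m)%:R / n%:R | <=
  (\sum_v (m v != ord0)%:R) / (n%:R : R).
Proof.
rewrite -card_nz -mulrBl normrM [`|_^-1|]ger0_norm ?invr_ge0 //.
rewrite ler_wpM2r ?invr_ge0 //.
rewrite /card_zero /card_alive.
set A := [set v | alive par m v].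
set B := [set v | alive par m v && (val (m v) == 0%N)].
set C := [set v | m v != ord0].
have BA : B \subset A by apply/fintype.subsetP => v; rewrite !inE => /andP[].
have ABC : A \subset B :|: C.
  apply/fintype.subsetP => v; rewrite !inE => ->; rewrite /=.
  by case: (m v) => [[|j] hj].
have h1 := subset_leq_card BA.
have h2 := leq_trans (subset_leq_card ABC) (leq_card_setU B C).
rewrite distrC ger0_norm ?subr_ge0 ?ler_nat // lerBlDl -natrD ler_nat.
exact: h2.
Qed.

Lemma inner_bound (R : realType) (n k : nat) (s : R) (par : {ffun 'I_n -> 'I_n}) :
  (0 < n)%N -> (0 < k)%N -> 0 <= s ->
  \sum_(m : {ffun 'I_n -> 'I_k.+1})
        (\prod_(v : 'I_n) @capped_law R k s (m v)) *
        `| (card_zero par m)%:R / n%:R - (card_alive par m)%:R / n%:R |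
  <= 1 - expR (- s).
Proof.
move=> n0 k0 s0.
apply: (le_trans (y := \sum_(m : {ffun 'I_n -> 'I_k.+1})
        (\prod_(v : 'I_n) @capped_law R k s (m v)) *
        ((\sum_v (m v != ord0)%:R) / (n%:R : R)))).
  apply: ler_sum => m _; apply: ler_wpM2l; last exact: pt_bound.
  by apply: prodr_ge0 => v _; apply: capped_ge0.
rewrite le_eqVlt; apply/orP; left; apply/eqP.
rewrite (eq_bigr (fun m : {ffun 'I_n -> 'I_k.+1} =>
   ((\prod_v @capped_law R k s (m v)) * \sum_v (m v != ord0)%:R) / n%:R));
  last by move=> m _; rewrite mulrA.
rewrite -mulr_suml.
rewrite (eq_bigr (fun m : {ffun 'I_n -> 'I_k.+1} => \sum_v
   (\prod_u @capped_law R k s (m u)) * (m v != ord0)%:R));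
  last by move=> m _; rewrite mulr_sumr.
rewrite exchange_big /=.
rewrite (eq_bigr (fun v => 1 - @capped_law R k s ord0));
  last by move=> v _; rewrite marg ?capped_sum.
rewrite sumr_const card_ord capped0 // -(mulr_natl (1 - expR (- s)) n) mulrAC mulfV ?mul1r //.
by rewrite pnatr_eq0 -lt0n.
Qed.

Lemma L1_bound (R : realType) (xi : nat -> R) (k n : nat) (s : R) :
  (forall p, 0 <= xi p) -> (0 < n)%N -> (0 < k)%N -> 0 <= s -> 0 < gw_Z xi n ->
  L1_gap xi k n s <= 1 - expR (- s).
Proof.
move=> hxi n0 k0 s0 hZ.
rewrite /L1_gap ler_pdivrMr // /gw_Z mulr_sumr.
apply: ler_sum => par _; rewrite [X in _ <= X]mulrC; apply: ler_wpM2l.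
  by apply: prodr_ge0 => v _; apply: hxi.
exact: inner_bound.
Qed.

Lemma delta_small (R : realType) (sigma2 : R) (k : nat) (t eps : R) :
  (0 < k)%N -> 0 < sigma2 -> 0 < t -> 0 < eps ->
  exists N : nat, forall n : nat, (N <= n)%N ->
    (0 < n)%N /\ 0 <= delta_n sigma2 k n * t /\ delta_n sigma2 k n * t < eps.
Proof.
move=> k0 hs ht he.
set a : R := ((2 * k)%:R)^-1.
have a0 : 0 < a by rewrite invr_gt0 ltr0n muln_gt0.
set C := powR (Num.sqrt sigma2) (k%:R^-1) * t.
have C0 : 0 < C by rewrite mulr_gt0 // powR_gt0 // sqrtr_gt0.
set M := powR (C / eps) (a^-1).
exists (Num.truncn M).+1 => n hn.
have nM : M < n%:R.
  apply: (lt_le_trans (truncnS_gt M)); by rewrite ler_nat.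
have M0 : 0 <= M by apply: powR_ge0.
have n0 : (0 < n)%N by apply: leq_trans hn.
have key : C / eps < powR n%:R a.
  have -> : C / eps = powR M a.
    by rewrite /M -powRrM mulVf ?powRr1 ?(gt_eqF a0) // divr_ge0 // ltW.
  by apply: gt0_ltr_powR => //; rewrite nnegrE // ltW // (le_lt_trans M0 nM).
have pn0 : 0 < powR n%:R a by apply: lt_trans key; rewrite divr_gt0.
have dE : delta_n sigma2 k n * t = C / powR n%:R a.
  by rewrite /delta_n /C /a powRN mulrAC.
split => //; rewrite dE; split; first by rewrite divr_ge0 // ltW.
by rewrite ltr_pdivrMr // mulrC -ltr_pdivrMr.
Qed.

Local Open Scope classical_set_scope.
Local Open Scope ring_scope.

Theorem lemma7 (R : realType) (xi : nat -> R) (sigma2 : R) (k : nat) (t : R) :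
  (2 <= k)%N ->
  (forall p, 0 <= xi p) ->
  (fun N : nat => \sum_(p < N) xi p) @ \oo --> (1 : R^o) ->
  (fun N : nat => \sum_(p < N) p%:R * xi p) @ \oo --> (1 : R^o) ->
  (fun N : nat => \sum_(p < N) (p * p.-1)%:R * xi p) @ \oo --> sigma2 ->
  0 < sigma2 ->
  0 < t ->
  forall eps : R, 0 < eps ->
  exists N : nat, forall n : nat, (N <= n)%N -> 0 < gw_Z xi n ->
    L1_gap xi k n (delta_n sigma2 k n * t) < eps.
Proof.
move=> hk hxi _ _ _ hs ht eps he.
have k0 : (0 < k)%N by apply: leq_trans hk.
have [N HN] := @delta_small R sigma2 k t eps k0 hs ht he.
exists N => n hn hZ.
have [n0 [s0 slt]] := HN n hn.
apply: le_lt_trans (@L1_bound R xi k n _ hxi n0 k0 s0 hZ) _.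
apply: le_lt_trans slt.
rewrite lerBlDr -lerBlDl; exact: expR_ge1Dx.
Qed.
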